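(* Let $\hat{\mathbb{N}}$ be the set of odd integers $n\ge3$, let $n \in \hat{\mathbb{N}}$ and $M \subseteq \hat{\mathbb{N}} \setminus \{n\}$. Let $T$ be the set of all partial Boolean functions whose domain does not contain the all-zero tuple. Then $\mathrm{pPol}\, R^{0,2}_n \not\supseteq T \cap \bigcap_{m \in M} \mathrm{pPol}\, R^{0,2}_m$.
   Context: Partial functions are on $\{0,1\}$: an $n$-ary partial function is a map $f:\operatorname{dom} f\to\{0,1\}$ with $\operatorname{dom} f\subseteq\{0,1\}^n$; an empty intersection of subsets of the set of all partial functions is understood as the set of all partial functions. For $\rho\subseteq\{0,1\}^h$, $\mathrm{pPol}\,\rho$ is the set of partial functions $f$ such that for every $h\times n$ matrix whose rows lie in $\operatorname{dom} f$ and whose columns lie in $\rho$, the column obtained by applying $f$ row-wise lies in $\rho$. Let $\rho_{0,2}=\{(0,0),(0,1),(1,0)\}$. For $n\ge2$, $R^{0,2}_{C,n}=\{(x_1,\dots,x_n)\in\{0,1\}^n: (x_i,x_{i+1})\in\rho_{0,2}\text{ for } i\in[n], \text{ with } x_{n+1}:=x_1\}$, $R^{0,2}_{K,n}=\{(x_1,\dots,x_n): (x_i,x_j)\in\rho_{0,2}\text{ for all } i\ne j\}$, and $R^{0,2}_n=R^{0,2}_{C,n}\times R^{0,2}_{K,n}\subseteq\{0,1\}^{2n}$. *)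

(* Defs.v *)
From mathcomp Require Import all_boot.
Set Implicit Arguments. Unset Strict Implicit. Unset Printing Implicit Defensive.

Notation btuple k := {ffun 'I_k -> bool}.

(* An n-ary partial Boolean function: f x = Some b means x \in dom f and f x = b;
   f x = None means x \notin dom f. *)
Definition pfun : Type := {k : nat & {ffun btuple k -> option bool}}.
Definition pf_arity (f : pfun) : nat := projT1 f.
Definition pf_fun (f : pfun) : btuple (pf_arity f) -> option bool := projT2 f.
Arguments pf_fun : clear implicits.

Definition relation (h : nat) := pred (btuple h).

Definition pPol (h : nat) (rho : relation h) (f : pfun) : Prop :=
  forall (M : 'I_h -> btuple (pf_arity f)) (v : btuple h),
    (forall i, pf_fun f (M i) = Some (v i)) ->
    (forall j : 'I_(pf_arity f), rho [ffun i => M i j]) ->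
    rho v.

Definition rho02 : pred (bool * bool) :=
  fun p => p \in [:: (false, false); (false, true); (true, false)].

(* R^{0,2}_{C,n}: cyclic condition, with x_{n+1} := x_1. *)
Definition RC02 (n : nat) : relation n :=
  fun x =>
  [forall i : 'I_n, forall j : 'I_n,
     (j == (i.+1 %% n) :> nat) ==> rho02 (x i, x j)].

Definition RK02 (n : nat) : relation n :=
  fun x => [forall i : 'I_n, forall j : 'I_n, (i != j) ==> rho02 (x i, x j)].

Definition R02 (n : nat) : relation (n + n) :=
  fun x => RC02 [ffun i : 'I_n => x (lshift n i)]
        && RK02 [ffun i : 'I_n => x (rshift n i)].

Definition inT (f : pfun) : Prop := pf_fun f [ffun => false] = None.

Definition Nhat (m : nat) : Prop := odd m /\ 3 <= m.

(* Main.v *)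
Require Import Defs.
From mathcomp Require Import all_boot zify.
Set Implicit Arguments. Unset Strict Implicit. Unset Printing Implicit Defensive.

Lemma arith_odd (L n U D UW DW : nat) : odd L -> U + D = L -> D + n*UW = U + n*DW -> n <= L.
Proof.
move=> oL h1 h2.
have [e|ne] := eqVneq UW DW.
  rewrite e in h2. have eUD : U = D by lia. by move: oL; rewrite -h1 eUD addnn odd_double.
case: (ltngtP UW DW) ne => // h _.
  have : n * UW + n <= n * DW by rewrite addnC -mulnS leq_mul2l h orbT.
  lia.
have : n * DW + n <= n * UW by rewrite addnC -mulnS leq_mul2l h orbT.
lia.
Qed.

Lemma modS_eq (L i : nat) : i < L -> i.+1 %% L = if i.+1 == L then 0 else i.+1.
Proof.
move=> h; case: eqP => [->|ne]; first by rewrite modnn.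
by rewrite modn_small //; lia.
Qed.

Definition adj n (x y : 'I_n) : bool :=
  ((y : nat) == (x : nat).+1 %% n) || ((x : nat) == (y : nat).+1 %% n).

Lemma adj_sym n (x y : 'I_n) : adj x y = adj y x.
Proof. by rewrite /adj orbC. Qed.

Lemma adj_irr n (x : 'I_n) : 1 < n -> adj x x = false.
Proof.
move=> h; rewrite /adj orbb (modS_eq (ltn_ord x)); case: ifP => [/eqP e|/negbT/eqP e]; apply/negbTE/eqP; lia.
Qed.

Lemma odd_girth n L (w : 'I_L -> 'I_n) (nxt : 'I_L -> 'I_L) :
  (forall i, (nxt i : nat) = i.+1 %% L) -> odd L ->
  (forall i, adj (w i) (w (nxt i))) -> n <= L.
Proof.
move=> hn oL hadj.
have Lpos : 0 < L by move: oL; case: (L).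
have injn : injective nxt.
  move=> i j e; apply/val_inj; move: (congr1 (@nat_of_ord L) e); rewrite !hn.
  rewrite (modS_eq (ltn_ord i)) (modS_eq (ltn_ord j)); case: ifP => [/eqP h1|/negbT/eqP h1]; case: ifP => [/eqP h2|/negbT/eqP h2] /=; lia.
pose up i := (w (nxt i) : nat) == (w i).+1 %% n.
pose uw i := up i && ((w i).+1 == n).
pose dw i := ~~ up i && ((w (nxt i)).+1 == n).
have step : forall i, (w (nxt i) + ~~ up i + n * uw i = w i + up i + n * dw i)%N.
  move=> i; rewrite /uw /dw; case Hu: (up i) => /=.
  - move: Hu; rewrite /up (modS_eq (ltn_ord (w i))); case: ifP => [/eqP h1|/negbT/eqP h1] /eqP h2; lia.
  - have := hadj i; rewrite /adj.
    move: Hu; rewrite /up => -> /= /eqP.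
    rewrite (modS_eq (ltn_ord (w (nxt i)))); case: ifP => [/eqP h1|/negbT/eqP h1] h2; lia.
have hs : (\sum_(i<L) (w (nxt i) + ~~ up i + n * uw i) = \sum_(i<L) (w i + up i + n * dw i))%N by apply: eq_bigr => i _; exact: step.
rewrite !big_split /= -!big_distrr /= in hs.
rewrite -(reindex_inj (P := xpredT) (F := fun i => nat_of_ord (w i)) injn) /= in hs.
have hUD : (\sum_(i < L) up i + \sum_(i < L) ~~ up i = L)%N.
  rewrite -big_split /= (eq_bigr (fun _ => 1%N)); last by move=> i _; case: (up i).
  by rewrite sum_nat_const card_ord muln1.
apply: (arith_odd (UW := (\sum_(i<L) uw i)%N) (DW := (\sum_(i<L) dw i)%N) oL hUD). by rewrite -!addnA in hs; move/addnI: hs.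
Qed.

Lemma cyc_const L (g : 'I_L -> bool) :
  (forall i i' : 'I_L, (i' : nat) = i.+1 %% L -> g i = g i') ->
  forall (i j : 'I_L), g i = g j.
Proof.
move=> h.
suff H : forall i : 'I_L, forall (l0 : 0 < L), g i = g (Ordinal l0).
  move=> i j; have l0 : 0 < L by case: (L) i => [[]|].
  by rewrite (H i l0) (H j l0).
move=> [k hk] l0; elim: k hk => [|k IH] hk; first by congr g; apply/val_inj.
have hk' : k < L by apply: ltnW.
rewrite -(IH hk'); symmetry; apply: h => /=.
by rewrite modn_small.
Qed.

Lemma pair_ext (A B : Type) (p q : A * B) : p.1 = q.1 -> p.2 = q.2 -> p = q.
Proof. by case: p q => ? ? [? ?] /= -> ->. Qed.

Section Constr.
Variable n : nat.

Definition Tc : finType := (('I_n * 'I_n) + ('I_n * 'I_n))%type.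
Definition kk := #|Tc|.

Definition memb (p : bool * 'I_n) (c : Tc) : bool :=
  match p, c with
  | (false, i), inl _ => false
  | (false, i), inr (i', t) => i' == i
  | (true, j), inl (x, y) => ((x == j) && ~~ adj j y) || ((y == j) && ~~ adj x j)
  | (true, j), inr (i, t) => t == j
  end.

Definition tup (p : bool * 'I_n) : btuple kk := [ffun c => memb p (enum_val c)].

Lemma tup_rank p t : tup p (enum_rank t) = memb p t.
Proof. by rewrite ffunE enum_rankK. Qed.

Definition disjM p q := forall t, ~~ (memb p t && memb q t).

Lemma memb_self p : memb p (inr (p.2, p.2)).
Proof. by case: p => [[]] i /=. Qed.

Lemma disj_type p q : disjM p q -> p.1 = q.1.
Proof.
case: p q => [[] i] [[] j] //= H.
- by have := H (inr (j, i)); rewrite /= !eqxx.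
- by have := H (inr (i, j)); rewrite /= !eqxx.
Qed.

Lemma disj_neq p q : disjM p q -> p <> q.
Proof. by move=> H e; have := H (inr (p.2, p.2)); rewrite -e memb_self. Qed.

Lemma disj_bb j j' : disjM (true, j) (true, j') -> adj j j'.
Proof.
move=> H; apply/negPn/negP => na; have := H (inl (j, j')).
by rewrite /= !eqxx na /= orbT.
Qed.

Lemma adj_disj j j' : 1 < n -> adj j j' -> disjM (true, j) (true, j').
Proof.
move=> n1 ha [[x y]|[x y]] /=; last first.
  by apply/negP => /andP[/eqP -> /eqP e]; rewrite e adj_irr in ha.
apply/negP => /andP[/orP[/andP[/eqP ex hy]|/andP[/eqP ey hx]] /orP[/andP[/eqP ex' hy']|/andP[/eqP ey' hx']]].
- by move: ha; rewrite -ex -ex' adj_irr.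
- by rewrite ey' ha in hy.
- by rewrite ex' adj_sym ha in hx.
- by move: ha; rewrite -ey -ey' adj_irr.
Qed.

Lemma aa_disj i i' : i != i' -> disjM (false, i) (false, i').
Proof.
move=> ne [[x y]|[x y]] //=; apply/negP => /andP[/eqP e1 /eqP e2].
by rewrite -e1 e2 eqxx in ne.
Qed.

Lemma memb_inj p q : 1 < n -> (forall t, memb p t = memb q t) -> p = q.
Proof.
move=> n1; case: p q => [[] i] [[] j] H.
- by have := H (inr (j, j)); rewrite /= eqxx => /eqP ->.
- by have := H (inl (i, i)); rewrite /= eqxx adj_irr.
- by have := H (inl (j, j)); rewrite /= eqxx adj_irr.
- by have := H (inr (j, j)); rewrite /= eqxx => /eqP ->.
Qed.

Definition value (p : bool * 'I_n) : bool := p.1 && (p.2 < 2).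

Definition f_fun (x : btuple kk) : option bool :=
  if x == [ffun => false] then None
  else if [pick p | x == tup p] is Some p then Some (value p) else None.

Lemma f_some x b : f_fun x = Some b -> {p | x = tup p /\ b = value p}.
Proof.
rewrite /f_fun; case: (x == _) => //; case: pickP => [p /eqP -> | _] //.
by case=> <-; exists p.
Qed.

Lemma f_tup p : 1 < n -> f_fun (tup p) = Some (value p).
Proof.
move=> n1; rewrite /f_fun.
have -> : (tup p == [ffun => false]) = false.
  apply/negbTE/eqP => e; have := tup_rank p (inr (p.2, p.2)).
  by rewrite e ffunE memb_self.
case: pickP => [p' /eqP e | H]; last by have := H p; rewrite eqxx.
have -> // : p' = p.
apply: memb_inj => // t; by rewrite -!tup_rank e.
Qed.

Definition fP : pfun := existT _ kk [ffun x => f_fun x].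

End Constr.

Lemma comb n m (P : 'I_(m + m) -> bool * 'I_n) :
  2 < n -> odd m -> 3 <= m -> m <> n ->
  (forall i i' : 'I_m, (i' : nat) = i.+1 %% m -> disjM (P (lshift m i)) (P (lshift m i'))) ->
  (forall i i' : 'I_m, i != i' -> disjM (P (rshift m i)) (P (rshift m i'))) ->
  forall i, value (P i) = false.
Proof.
move=> n2 om m3 mn HC HK.
have n1 : 1 < n by apply: ltnW.
have m0 : 0 < m by apply: leq_trans m3.
pose o0 := Ordinal m0.
have Kuni : forall i, (P (rshift m i)).1 = (P (rshift m o0)).1.
  move=> i; case: (eqVneq i o0) => [-> //|ne]; exact: disj_type (HK _ _ ne).
have Kinj : injective (fun i => (P (rshift m i)).2).
  move=> i i' /= e; apply/eqP; apply/negPn/negP => ne.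
  by apply: (disj_neq (HK _ _ ne)); apply: pair_ext => //; rewrite !Kuni.
have mlt : m < n.
  have := @leq_card _ _ _ Kinj; rewrite !card_ord => h.
  by rewrite ltn_neqAle h andbT; apply/eqP.
pose nxt (i : 'I_m) : 'I_m := Ordinal (ltn_pmod i.+1 m0).
have Cfalse : forall i, (P (lshift m i)).1 = false.
  have Cc := @cyc_const m (fun i => (P (lshift m i)).1).
  have Cc' : forall i j : 'I_m, (P (lshift m i)).1 = (P (lshift m j)).1.
    by apply: Cc => i i' e; apply: disj_type (HC _ _ e).
  move=> i; apply/negbTE/negP => ht.
  have ht' : forall j, (P (lshift m j)).1 = true by move=> j; rewrite (Cc' j i).
  have : n <= m; last by rewrite leqNgt mlt.
  apply: (@odd_girth n m (fun i => (P (lshift m i)).2) nxt) => // j.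
  apply: disj_bb.
  have e1 : P (lshift m j) = (true, (P (lshift m j)).2) by apply: pair_ext => //=; rewrite ht'.
  have e2 : P (lshift m (nxt j)) = (true, (P (lshift m (nxt j))).2) by apply: pair_ext => //=; rewrite ht'.
  by rewrite -e1 -e2; apply: HC.
have Kfalse : forall i, (P (rshift m i)).1 = false.
  move=> i; rewrite Kuni; apply/negbTE/negP => ht.
  pose idx (t : 'I_3) : 'I_m := Ordinal (leq_trans (ltn_ord t) m3).
  pose nxt3 (t : 'I_3) : 'I_3 := Ordinal (ltn_pmod t.+1 (isT : 0 < 3)).
  have : n <= 3; last by move=> h; move: mlt; rewrite ltnNge (leq_trans h m3).
  apply: (@odd_girth n 3 (fun t => (P (rshift m (idx t))).2) nxt3) => // t.
  apply: disj_bb.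
  have ht' : forall j, (P (rshift m j)).1 = true by move=> j; rewrite Kuni.
  have e1 : P (rshift m (idx t)) = (true, (P (rshift m (idx t))).2) by apply: pair_ext => //=; rewrite ht'.
  have e2 : P (rshift m (idx (nxt3 t))) = (true, (P (rshift m (idx (nxt3 t)))).2) by apply: pair_ext => //=; rewrite ht'.
  rewrite -e1 -e2; apply: HK.
  by clear e1 e2; case: t => [[|[|[|]]] ?].
move=> i; case: (split_ordP i) => j ->; by rewrite /value ?Cfalse ?Kfalse.
Qed.

Lemma rho02E a b : rho02 (a, b) = ~~ (a && b).
Proof. by case: a; case: b. Qed.

Lemma split_l m (i : 'I_m) : split (lshift m i) = inl i.
Proof. exact: (unsplitK (inl i)). Qed.
Lemma split_r m (i : 'I_m) : split (rshift m i) = inr i.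
Proof. exact: (unsplitK (inr i)). Qed.

Lemma R02_false m (v : btuple (m + m)) : (forall i, v i = false) -> R02 v.
Proof.
move=> vf; apply/andP; split; apply/forallP=> i; apply/forallP => j; apply/implyP=> _;
  by rewrite !ffunE !vf.
Qed.

Theorem mainTheorem18 (n : nat) (M : nat -> Prop) :
  Nhat n ->
  (forall m, M m -> Nhat m /\ m <> n) ->
  exists f : pfun,
    [/\ inT f, (forall m, M m -> pPol (@R02 m) f) & ~ pPol (@R02 n) f].
Proof.
move=> [on n3] HM.
have n2 : 2 < n by [].
have n1 : 1 < n by apply: ltnW.
exists (fP n); split.
- by rewrite /inT /pf_fun /fP /= ffunE /f_fun eqxx.
- move=> m /HM [[om m3] mn] Mx v Hrow Hcol.
  have Hr : forall i, f_fun (Mx i) = Some (v i).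
    by move=> i; have := Hrow i; rewrite /pf_fun /fP /= ffunE.
  pose P i := sval (f_some (Hr i)).
  have hP : forall i, Mx i = tup (P i) /\ v i = value (P i) := fun i => proj2_sig (f_some (Hr i)).
  apply: R02_false => i; rewrite (hP i).2.
  apply: (comb n2 om m3 mn).
  + move=> j j' e t; have := Hcol (enum_rank t).
    case/andP => hc _; move/forallP: hc => /(_ j)/forallP/(_ j')/implyP.
    rewrite e eqxx => /(_ isT); rewrite !ffunE (hP _).1 (hP (lshift m j')).1 !tup_rank.
    by rewrite rho02E.
  + move=> j j' ne t; have := Hcol (enum_rank t).
    case/andP => _ hk; move/forallP: hk => /(_ j)/forallP/(_ j')/implyP.
    move=> /(_ ne); rewrite !ffunE (hP _).1 (hP (rshift m j')).1 !tup_rank.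
    by rewrite rho02E.
- move=> H.
  pose Q (i : 'I_(n + n)) : bool * 'I_n := match split i with inl j => (true, j) | inr j => (false, j) end.
  have o0 : 0 < n by apply: ltnW.
  have hQl : forall j, Q (lshift n j) = (true, j) by move=> j; rewrite /Q split_l.
  have hQr : forall j, Q (rshift n j) = (false, j) by move=> j; rewrite /Q split_r.
  have HR := H (fun i => tup (Q i)) [ffun i => value (Q i)].
  have hrow : forall i, pf_fun (fP n) (tup (Q i)) = Some ([ffun i => value (Q i)] i).
    by move=> i; rewrite /pf_fun /fP /= !ffunE f_tup.
  move: (HR hrow) => {HR hrow} HR.
  have hcol : forall c, R02 [ffun i => tup (Q i) c].
    move=> c; apply/andP; split; apply/forallP=> i; apply/forallP => i'; apply/implyP => e;
      rewrite !ffunE ?hQl ?hQr rho02E.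
    * by apply: (adj_disj n1 _ (enum_val c)); rewrite /adj e.
    * exact: (aa_disj e (enum_val c)).
  case/andP: (HR hcol) => + _.
  move/forallP => /(_ (Ordinal o0))/forallP/(_ (Ordinal n1))/implyP.
  rewrite /= modn_small // eqxx => /(_ isT).
  by rewrite !ffunE !hQl.
Qed.
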